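(* Let $(X,\to)$ be a finitely branching transition system over $A$. Then $\mathit{lo}_b$ is $c_b$-compatible, i.e. $\mathit{lo}_b(c_b(\mathcal S))\subseteq c_b(\mathit{lo}_b(\mathcal S))$ for all $\mathcal S\subseteq\mathcal P(X)$.
   Context: A transition system over $A$: $(X,\to)$, $\to\subseteq X\times A\times X$; finitely branching: $\{(a,x')\mid x\xrightarrow{a}x'\}$ finite for each $x$. $\Diamond_a(S)=\{x\mid\exists x'\in S\colon x\xrightarrow{a}x'\}$. $\mathit{lo}_b(\mathcal S)=\bigcup_{a\in A}\{\Diamond_a(S)\mid S\in\mathrm{cl}^{\cup,\lnot}_f(\mathcal S)\}$, where $\mathrm{cl}^{\cup,\lnot}_f(\mathcal S)$ is the closure of $\mathcal S$ under finite unions and complement. $\alpha_b(\mathcal S)=\{(x,x')\mid\forall S\in\mathcal S\colon(x\in S\iff x'\in S)\}$, $\gamma_b(R)=\{S\subseteq X\mid\forall(x,x')\in R\colon(x\in S\iff x'\in S)\}$ for equivalences $R$ on $X$, and $c_b=\gamma_b\circ\alpha_b$. *)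

(* Defs.v *)
From mathcomp Require Import all_boot.
From mathcomp Require Import boolp classical_sets cardinality.
Set Implicit Arguments. Unset Strict Implicit. Unset Printing Implicit Defensive.
Local Open Scope classical_set_scope.

(* A transition system over A on states X: trans x a x' means x -a-> x'. *)
Definition finitely_branching (A X : Type) (trans : X -> A -> X -> Prop) : Prop :=
  forall x : X, finite_set [set p : A * X | trans x p.1 p.2].

Definition diamond (A X : Type) (trans : X -> A -> X -> Prop) (a : A) (S : set X)
  : set X := [set x | exists2 x', S x' & trans x a x'].

(* cl^{u,not}_f(F): the least family containing F, closed under finite unions
   (empty union and binary unions) and complement. *)
Inductive cl_union_compl (X : Type) (F : set (set X)) : set (set X) :=
  | cl_base S : F S -> cl_union_compl F S
  | cl_empty : cl_union_compl F set0
  | cl_union S T : cl_union_compl F S -> cl_union_compl F T ->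
      cl_union_compl F (S `|` T)
  | cl_compl S : cl_union_compl F S -> cl_union_compl F (~` S).

Definition lo_b (A X : Type) (trans : X -> A -> X -> Prop) (F : set (set X))
  : set (set X) :=
  [set T | exists a : A, exists2 S, cl_union_compl F S & T = diamond trans a S].

Definition alpha_b (X : Type) (F : set (set X)) : X -> X -> Prop :=
  fun x x' => forall S, F S -> (S x <-> S x').

Definition gamma_b (X : Type) (R : X -> X -> Prop) : set (set X) :=
  [set S | forall x x', R x x' -> (S x <-> S x')].

Definition c_b (X : Type) (F : set (set X)) : set (set X) := gamma_b (alpha_b F).

(* Main.v *)
Require Import Defs.
From mathcomp Require Import all_boot.
From mathcomp Require Import boolp classical_sets cardinality.
From Stdlib Require Import Classical.
Local Open Scope classical_set_scope.

Lemma cl_cb (X : Type) (F : set (set X)) S :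
  cl_union_compl (c_b F) S -> c_b F S.
Proof.
elim=> {S} [S h| |S T _ hS _ hT|S _ hS].
- exact h.
- by move=> x x' _; split.
- move=> x x' r; have := hS x x' r; have := hT x x' r.
  rewrite /setU /=; tauto.
- move=> x x' r; have := hS x x' r; rewrite /setC /=; tauto.
Qed.

Lemma cl_inter (X : Type) (F : set (set X)) U V :
  cl_union_compl F U -> cl_union_compl F V -> cl_union_compl F (U `&` V).
Proof.
move=> hU hV.
have -> : U `&` V = ~` (~` U `|` ~` V) by rewrite setCU !setCK.
by apply: cl_compl; apply: cl_union; apply: cl_compl.
Qed.

Lemma cl_T (X : Type) (F : set (set X)) : cl_union_compl F setT.
Proof. rewrite -setC0; apply: cl_compl; apply: cl_empty. Qed.

Lemma sep_seq (A X : Type) (F : set (set X)) (a : A) (y : X)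
  (s : seq (classicType (A * X))) :
  (forall p, p \in s -> exists U, [/\ cl_union_compl F U, U y &
        (p.1 = a -> ~ U p.2)]) ->
  exists U, [/\ cl_union_compl F U, U y &
        forall p, p \in s -> p.1 = a -> ~ U p.2].
Proof.
elim: s => [|q s IH] h.
  by exists setT; split; [apply: cl_T| by [] | by []].
have [U [hU Uy HU]] := IH (fun p ps => h p (mem_behead (s:=q :: s) ps)).
have [V [hV Vy HV]] := h q (mem_head _ _).
exists (U `&` V); split; first exact: cl_inter.
  by split.
move=> p; rewrite in_cons => /orP [/eqP -> | ps] pa [Up Vp].
  exact: HV pa Vp.
exact: HU p ps pa Up.
Qed.

Lemma one_dir (A X : Type) (trans : X -> A -> X -> Prop)
  (hfb : finitely_branching trans) (F : set (set X)) x x' a S :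
  (forall S', cl_union_compl F S' -> (diamond trans a S' x <-> diamond trans a S' x')) ->
  c_b F S -> diamond trans a S x -> diamond trans a S x'.
Proof.
move=> H cS [y Sy txy].
apply: contrapT => hno.
have [s hs] := (@finite_seqP (classicType (A * X)) _).1 (hfb x').
have [U [hU Uy HU]] : exists U, [/\ cl_union_compl F U, U y &
        forall p, p \in s -> p.1 = a -> ~ U p.2].
  apply: sep_seq => p ps.
  case: (classic (p.1 = a)) => pa; last first.
    by exists setT; split => //; apply: cl_T.
  have tp : trans x' p.1 p.2.
    have : [set` s] p by [].
    by rewrite -hs.
  rewrite pa in tp.
  have nSp : ~ S p.2 by move=> Sp; apply: hno; exists p.2.
  apply: contrapT => nU.
  apply: nSp.
  suff al : alpha_b F y p.2 by exact: (cS y p.2 al).1 Sy.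
  move=> S' FS'.
  case: (classic (S' y)) => S'y; case: (classic (S' p.2)) => S'p; try tauto.
  - exfalso; apply: nU; exists S'; split => //; exact: cl_base.
  - exfalso; apply: nU; exists (~` S'); split => //.
      by apply: cl_compl; apply: cl_base.
    by move=> _ /=; apply.
have [y' Uy' ty'] : diamond trans a U x' by apply/(H U hU); exists y.
have : (a, y') \in s.
  have : [set p : A * X | trans x' p.1 p.2] (a, y') by [].
  by rewrite hs.
by move=> ins; exact: HU _ ins erefl Uy'.
Qed.

Theorem mainTheorem9 (A X : Type) (trans : X -> A -> X -> Prop)
  (hfb : finitely_branching trans) (F : set (set X)) :
  lo_b trans (c_b F) `<=` c_b (lo_b trans F).
Proof.
move=> T [a [S hS ->]] x x' hal.
have cS := @cl_cb _ _ _ hS.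
have H : forall S', cl_union_compl F S' ->
    (diamond trans a S' x <-> diamond trans a S' x').
  by move=> S' hS'; apply: hal; exists a; exists S'.
split; first exact: (@one_dir _ _ _ hfb _ _ _ _ _ H cS).
apply: (@one_dir _ _ _ hfb _ _ _ _ _ _ cS) => S' hS'; have := H S' hS'; tauto.
Qed.
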